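(* Let $Q$ be a real-valued $\Gamma$-periodic potential on a $\Gamma$-periodic graph $\mathcal G$. (i) If $\sigma(A(0)+Q)=\sigma(A(0))$ and the fundamental graph $\mathcal G_*$ has no loops, then $Q\equiv0$. (ii) If $\sigma(A(0)+Q)=\sigma(A(0)-\varkappa)$, where $\varkappa$ is the degree potential $\varkappa(v)=\varkappa_v$, then $Q\equiv-\varkappa$.
   Context: Let $\Gamma$ be a lattice of rank $d$ in $\mathbb R^d$ with basis $\mathfrak a_1,\dots,\mathfrak a_d$ and fundamental cell $\Omega=\{\sum_s x_s\mathfrak a_s: x_s\in[0,1)\}$. A $\Gamma$-periodic graph $\mathcal G=(\mathcal V,\mathcal E)$ is a connected, locally finite graph embedded in $\mathbb R^d$, invariant under translation by $\Gamma$, with finite quotient; $\mathcal G$ has no loops, multiple edges are allowed. Edges are counted with both orientations ($\mathcal A$ the oriented edges). The fundamental graph $\mathcal G_*=(\mathcal V_*,\mathcal A_* )=\mathcal G/\Gamma$ (may have loops, multiple edges); $\varkappa_v$ is the number of oriented edges starting at $v$. Every vertex is uniquely $v=v_0+[v]$ with $v_0\in\Omega$, $[v]\in\Gamma$; for $\mathbf e=(u,v)$, $\tau(\mathbf e)=[v]_{\mathbb A}-[u]_{\mathbb A}\in\mathbb Z^d$ (coordinates in the basis), well defined on $\mathcal A_*$. A potential is $Q:\mathcal V_*\to\mathbb R$. $A(0)$ is the operator on $\ell^2(\mathcal V_* )$ with $(A(0)f)(v)=\sum_{\mathbf e=(v,u)\in\mathcal A_*}f(u)$ (more generally $A(k)$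 with factors $e^{i\langle\tau(\mathbf e),k\rangle}$); $Q$, $\varkappa$ act by multiplication. $\sigma(\cdot)$ is the spectrum (eigenvalues with multiplicities). *)

(* Defs.v *)
From mathcomp Require Import all_boot all_order all_algebra.
From mathcomp Require Import reals.
Set Implicit Arguments. Unset Strict Implicit. Unset Printing Implicit Defensive.
Import Order.TTheory GRing.Theory Num.Theory.
Local Open Scope ring_scope.

(* A Gamma-periodic graph G (lattice of rank d) is encoded by its fundamental
   graph G_* = G / Gamma with vertex set 'I_n, the finite type E of oriented
   edges of G_*, source/target maps, edge reversal, and the index
   tau(e) = [v]_A - [u]_A in Z^d (row vector of length d). The periodic graph
   is recovered as vertices (v, a), v : 'I_n, a : Z^d, with an oriented edge
   (src e, a) -> (tgt e, a + tau e) for each e and a. *)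

Fixpoint is_walk n (E : Type) (src tgt : E -> 'I_n) (v w : 'I_n) (p : seq E)
  : bool :=
  match p with
  | [::] => v == w
  | e :: p' => (src e == v) && is_walk src tgt (tgt e) w p'
  end.

Definition periodic_graph_data d n (E : finType) (src tgt : E -> 'I_n)
  (rev : E -> E) (tau : E -> 'rV[int]_d) : Prop :=
  (* every edge is counted with both orientations *)
  (forall e, rev (rev e) = e) /\
  (forall e, rev e != e) /\
  (forall e, src (rev e) = tgt e /\ tgt (rev e) = src e) /\
  (forall e, tau (rev e) = - tau e) /\
  (* the periodic graph G has no loops: an edge of G_* joining v to itself
     lifts to an edge (v,a) -> (v, a + tau e), which is a loop iff tau e = 0 *)
  (forall e, src e = tgt e -> tau e != 0) /\
  (* the periodic graph G is connected: (v,0) is joined to (w,a) *)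
  (forall (v w : 'I_n) (a : 'rV[int]_d),
     exists p : seq E, is_walk src tgt v w p /\ \sum_(e <- p) tau e = a).

Definition A0 (R : nzRingType) n (E : finType) (src tgt : E -> 'I_n)
  : 'M[R]_n :=
  \matrix_(i, j) (#|[set e : E | (src e == i) && (tgt e == j)]|)%:R.

Definition kappa n (E : finType) (src : E -> 'I_n) (v : 'I_n) : nat :=
  #|[set e : E | src e == v]|.

Definition pot_mx (R : nzRingType) n (Q : 'I_n -> R) : 'M[R]_n :=
  diag_mx (\row_i Q i).

(* multiplicity of x as an eigenvalue of M (as a root of the characteristic
   polynomial); sigma(M) = sigma(N) with multiplicities means these agree *)
Definition eig_mult (R : realType) n (M : 'M[R]_n) (x : R) : nat :=
  mup x (char_poly M).

Definition same_spectrum (R : realType) n (M N : 'M[R]_n) : Prop :=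
  forall x : R, eig_mult M x = eig_mult N x.

(* Main.v *)
Require Import Defs.
From mathcomp Require Import all_boot all_order all_algebra.
From mathcomp Require Import reals.
From mathcomp Require Import complex.
From mathcomp Require Import ring.
Import Order.TTheory GRing.Theory Num.Theory Num.Def.
Local Open Scope ring_scope.

Lemma char_poly_conj (F : fieldType) n (Q P D : 'M[F]_n) :
  Q *m P = 1%:M -> char_poly (Q *m D *m P) = char_poly D.
Proof.
move=> QP.
have QP' : map_mx polyC Q *m map_mx polyC P = 1%:M by rewrite -map_mxM QP map_mx1.
rewrite /char_poly.
have -> : char_poly_mx (Q *m D *m P) =
   map_mx polyC Q *m char_poly_mx D *m map_mx polyC P.
  rewrite /char_poly_mx mulmxBr mulmxBl !map_mxM; congr (_ - _).
  by rewrite scalar_mxC -mulmxA QP' mulmx1.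
rewrite !det_mulmx mulrAC -det_mulmx QP' det1 mul1r //.
Qed.

Section Graph.
Variables (n : nat) (E : finType) (src tgt : E -> 'I_n) (rev : E -> E).
Hypothesis revK : forall e, rev (rev e) = e.
Hypothesis st : forall e, src (rev e) = tgt e /\ tgt (rev e) = src e.

Lemma rev_inj : injective rev.
Proof. exact: can_inj revK. Qed.

Lemma sum_rev (K : nmodType) (F : E -> K) : \sum_e F e = \sum_e F (rev e).
Proof. exact: (reindex_inj rev_inj). Qed.

Lemma card_sum (K : nzSemiRingType) (p : pred E) :
  (#|[set e | p e]|)%:R = \sum_e (if p e then 1 else 0 : K).
Proof.
rewrite -big_mkcond /= -sumr_const; apply: eq_bigl => e; by rewrite inE.
Qed.

Lemma A0E (K : nzRingType) i j :
  A0 K src tgt i j = \sum_e (if (src e == i) && (tgt e == j) then 1 else 0).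
Proof. by rewrite mxE card_sum. Qed.

Lemma kappaE (K : nzRingType) i :
  (kappa src i)%:R = \sum_e (if src e == i then 1 else 0 : K).
Proof. by rewrite /kappa card_sum. Qed.

Lemma sum_if (K : nmodType) (k : 'I_n) (F : 'I_n -> K) :
  \sum_i (if k == i then F i else 0) = F k.
Proof.
rewrite -big_mkcond /=; apply: (big_pred1 k) => i /=; by rewrite eq_sym.
Qed.

Lemma A0_sym (K : nzRingType) : (A0 K src tgt)^T = A0 K src tgt.
Proof.
apply/matrixP => i j; rewrite mxE !A0E sum_rev; apply: eq_bigr => e _.
by have [-> ->] := st e; rewrite andbC.
Qed.

Lemma A0_bil (K : comNzRingType) (u v : 'I_n -> K) :
  \sum_i \sum_j u i * A0 K src tgt i j * v j = \sum_e u (src e) * v (tgt e).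
Proof.
have H : forall i j, u i * A0 K src tgt i j * v j =
   \sum_e (if src e == i then (if tgt e == j then u i * v j else 0) else 0).
  move=> i j; rewrite A0E mulr_sumr mulr_suml; apply: eq_bigr => e _.
  by case: (src e == i); case: (tgt e == j) => /=; rewrite ?mulr1 ?mulr0 ?mul0r.
rewrite (eq_bigr _ (fun i _ => eq_bigr _ (fun j _ => H i j))).
rewrite (eq_bigr _ (fun i _ => exchange_big _ _ _ _ _ _)) /= exchange_big /=.
apply: eq_bigr => e _.
have H2 : forall i, \sum_j (if src e == i then (if tgt e == j then u i * v j else 0) else 0)
   = if src e == i then u i * v (tgt e) else 0.
  by move=> i; case: (src e == i); rewrite ?sum_if // big1.
by rewrite (eq_bigr _ (fun i _ => H2 i)) sum_if.
Qed.

Lemma A0_row (K : nzRingType) j :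
  \sum_i A0 K src tgt j i = (kappa src j)%:R.
Proof.
under eq_bigr => i _ do rewrite A0E.
rewrite exchange_big kappaE /=; apply: eq_bigr => e _.
case: (src e == j) => /=; last by rewrite big1.
exact: sum_if.
Qed.

Lemma kappa_sum (K : nzRingType) (w : 'I_n -> K) :
  \sum_i (kappa src i)%:R * w i = \sum_e w (src e).
Proof.
have H : forall i, (kappa src i)%:R * w i = \sum_e (if src e == i then w i else 0).
  move=> i; rewrite kappaE mulr_suml; apply: eq_bigr => e _.
  by case: (src e == i); rewrite ?mul1r ?mul0r.
rewrite (eq_bigr _ (fun i _ => H i)) exchange_big /=; apply: eq_bigr => e _.
exact: sum_if.
Qed.

End Graph.

Section Spec.
Variable R : realType.
Local Notation C := (R[i]).
Local Notation rc := (real_complex R).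
Local Notation ct P := (map_mx conjC (trmx P)).



Lemma real_rc (x : C) : x \is Num.real -> x = rc (complex.Re x).
Proof. by case: x => a b; rewrite complex_real => /eqP /= ->. Qed.

Lemma rc_real (x : R) : rc x \is Num.real.
Proof. by rewrite /= complex_real. Qed.

Lemma sym_decomp n (M : 'M[R]_n) : M^T = M ->
  exists (P : 'M[C]_n) (d : 'rV[R]_n),
    P *m ct P = 1%:M /\ map_mx rc M = ct P *m diag_mx (map_mx rc d) *m P.
Proof.
move=> Msym.
have Mh : map_mx rc M \is hermsymmx.
  apply: realsym_hermsym.
    apply/is_hermitianmxP; rewrite expr0 scale1r map_mx_id //.
    by rewrite -{2}Msym map_trmx trmxK.
  by apply/mxOverP => i j; rewrite mxE rc_real.
have /hermitian_normalmx /orthomx_spectralP Me := Mh.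
have dr := hermitian_spectral_diag_real Mh.
exists (spectralmx (map_mx rc M)), (map_mx (@complex.Re R) (spectral_diag (map_mx rc M))).
split; first by apply/unitarymxP; exact: spectral_unitarymx.
rewrite -invmx_unitary ?spectral_unitarymx //.
rewrite {1}Me; congr (_ *m diag_mx _ *m _).
apply/matrixP => i j; rewrite !mxE -real_rc //.
move/mxOverP: dr; apply.
Qed.

Lemma tr_rc n (M : 'M[R]_n) : \tr (map_mx rc M) = rc (\tr M).
Proof. by rewrite /mxtrace rmorph_sum; apply: eq_bigr => i _; rewrite mxE. Qed.

Lemma spec_facts n (M : 'M[R]_n) (P : 'M[C]_n) (d : 'rV[R]_n) :
  P *m ct P = 1%:M -> map_mx rc M = ct P *m diag_mx (map_mx rc d) *m P ->
  [/\ char_poly M = \prod_(i < n) ('X - (d 0 i)%:P),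
      \tr M = \sum_i d 0 i &
      \tr (M *m M) = \sum_i (d 0 i)^+2].
Proof.
move=> PU Me; have PU' := mulmx1C PU.
set D := diag_mx _ in Me.
split.
- apply: (map_poly_inj rc).
  rewrite map_char_poly Me char_poly_conj // char_poly_trig ?diag_mx_is_trig //.
  rewrite map_prod_XsubC; apply: eq_bigr => i _; rewrite !mxE eqxx mulr1n.
  done.
- apply: (@complexI R); rewrite -tr_rc Me mxtrace_mulC mulmxA PU mul1mx.
  by rewrite mxtrace_diag rmorph_sum; apply: eq_bigr => i _; rewrite mxE.
- apply: (@complexI R); rewrite -tr_rc map_mxM Me.
  rewrite -!mulmxA mxtrace_mulC -!mulmxA [P *m (ct P *m _)]mulmxA PU mul1mx.
  rewrite mulmx1 /mxtrace rmorph_sum; apply: eq_bigr => i _.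
  by rewrite /D mul_diag_mx !mxE eqxx mulr1n rmorphXn expr2.
Qed.

Lemma ct_mul m n p (A : 'M[C]_(m, n)) (B : 'M[C]_(n, p)) : ct (A *m B) = ct B *m ct A.
Proof. by rewrite trmx_mul map_mxM. Qed.

Lemma ctK m n (A : 'M[C]_(m, n)) : ct (ct A) = A.
Proof. by apply/matrixP => i j; rewrite !mxE conjCK. Qed.

Lemma qform n (M : 'M[R]_n) (P : 'M[C]_n) (d : 'rV[R]_n) (u : 'rV[C]_n) :
  map_mx rc M = ct P *m diag_mx (map_mx rc d) *m P ->
  (u *m map_mx rc M *m ct u) 0 0 =
  \sum_i rc (d 0 i) * ((u *m ct P) 0 i * conjC ((u *m ct P) 0 i)).
Proof.
move=> Me; rewrite Me.
have -> : u *m (ct P *m diag_mx (map_mx rc d) *m P) *m ct u =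
   (u *m ct P) *m diag_mx (map_mx rc d) *m ct (u *m ct P).
  by rewrite ct_mul ctK !mulmxA.
rewrite mxE; apply: eq_bigr => i _.
by rewrite mul_mx_diag !mxE; ring.
Qed.
Arguments qform {n M P d} u.

Lemma qform0 n (M : 'M[R]_n) (P : 'M[C]_n) (d : 'rV[R]_n) (u : 'rV[C]_n) :
  map_mx rc M = ct P *m diag_mx (map_mx rc d) *m P ->
  (forall i, d 0 i <= 0) ->
  (u *m map_mx rc M *m ct u) 0 0 = 0 -> u *m map_mx rc M = 0.
Proof.
move=> Me dle0; rewrite (qform u Me) => /eqP.
rewrite -oppr_eq0 -sumrN => /eqP H.
have Hi := psumr_eq0P _ H.
have {Hi} Hi : forall i, rc (d 0 i) * ((u *m ct P) 0 i * conjC ((u *m ct P) 0 i)) = 0.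
  move=> i; apply/eqP; rewrite -oppr_eq0; apply/eqP; apply: Hi => // j _.
  rewrite oppr_ge0 mulr_le0_ge0 ?mul_conjC_ge0 //.
  by have := dle0 j; rewrite -(lecR (d 0 j) 0).
rewrite Me !mulmxA; set w := u *m ct P in Hi *; clearbody w.
have -> : w *m diag_mx (map_mx rc d) = 0.
  apply/matrixP => i j; rewrite mul_mx_diag ord1 !mxE.
  have /eqP := Hi j; rewrite mulf_eq0 mul_conjC_eq0 => /orP[] /eqP ->.
    by rewrite mulr0.
  by rewrite mul0r.
by rewrite mul0mx.
Qed.

Lemma qform_e n (M : 'M[R]_n) (P : 'M[C]_n) (d : 'rV[R]_n) (i : 'I_n) :
  P *m ct P = 1%:M ->
  map_mx rc M = ct P *m diag_mx (map_mx rc d) *m P ->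
  rc (d 0 i) = (row i P *m map_mx rc M *m ct (row i P)) 0 0.
Proof.
move=> PU Me; rewrite (qform (row i P) Me) -row_mul PU row1.
rewrite (bigD1 i) //= big1 ?addr0.
  by rewrite !mxE !eqxx /= conjC1 !mulr1.
by move=> j ji; rewrite !mxE /= (negbTE ji) /= mul0r mulr0.
Qed.

End Spec.


Section Final.
Variable R : realType.
Local Notation C := (R[i]).
Local Notation rc := (real_complex R).
Local Notation ct P := (map_mx conjC (trmx P)).

Lemma form_expand n (u : 'rV[C]_n) (X : 'M[C]_n) :
  (u *m X *m ct u) 0 0 = \sum_i \sum_j u 0 i * X i j * conjC (u 0 j).
Proof.
rewrite mxE exchange_big /=; apply: eq_bigr => j _.
rewrite !mxE mulr_suml; by apply: eq_bigr.
Qed.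

Lemma seq_big (T : Type) (idx : T) (op : Monoid.com_law idx) n (d : 'rV[R]_n) (F : R -> T) :
  \big[op/idx]_i F (d 0 i) = \big[op/idx]_(x <- [seq d 0 i | i in 'I_n]) F x.
Proof. by rewrite big_image. Qed.

Lemma spec_perm n (M N : 'M[R]_n) (d d' : 'rV[R]_n) :
  char_poly M = \prod_(i < n) ('X - (d 0 i)%:P) ->
  char_poly N = \prod_(i < n) ('X - (d' 0 i)%:P) ->
  same_spectrum M N ->
  perm_eq [seq d 0 i | i in 'I_n] [seq d' 0 i | i in 'I_n].
Proof.
move=> cM cN sp; apply/allP => x _ /=; apply/eqP.
have := sp x; rewrite /eig_mult cM cN.
by rewrite !(@seq_big _ _ _ n _ (fun x : R => 'X - x%:P)) !mu_prod_XsubC.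
Qed.

Lemma potE (K : nzRingType) n (Q : 'I_n -> K) i j : pot_mx Q i j = Q i *+ (i == j).
Proof. by rewrite !mxE. Qed.

Lemma diag_sum (K : nzRingType) n (F : 'I_n -> 'I_n -> K) (i : 'I_n) :
  \sum_j F i j *+ (i == j) = F i i.
Proof.
rewrite (bigD1 i) //= eqxx mulr1n big1 ?addr0 // => j ji.
by rewrite eq_sym (negbTE ji) mulr0n.
Qed.

Lemma lap_form n (E : finType) (src tgt : E -> 'I_n) (rev : E -> E) :
  (forall e, rev (rev e) = e) ->
  (forall e, src (rev e) = tgt e /\ tgt (rev e) = src e) ->
  forall u : 'rV[C]_n,
  (u *m map_mx rc (A0 R src tgt - pot_mx (fun v => (kappa src v)%:R)) *m ct u) 0 0 <= 0.
Proof.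
move=> revK st u.
have -> : map_mx rc (A0 R src tgt - pot_mx (fun v => (kappa src v)%:R)) =
    A0 C src tgt - pot_mx (fun v => (kappa src v)%:R).
  by apply/matrixP => i j; rewrite !mxE rmorphB !rmorphMn !rmorph1.
rewrite mulmxDr mulmxN mulmxDl mulNmx [X in X <= 0]mxE [X in _ + X <= 0]mxE !form_expand A0_bil.
have -> : \sum_i \sum_j u 0 i * pot_mx (fun v => (kappa src v)%:R) i j * conjC (u 0 j)
   = \sum_i (kappa src i)%:R * (u 0 i * conjC (u 0 i)).
  apply: eq_bigr => i _.
  transitivity (u 0 i * (kappa src i)%:R * conjC (u 0 i)); last by ring.
  rewrite -(@diag_sum _ n (fun i j => u 0 i * (kappa src i)%:R * conjC (u 0 j)) i).
  apply: eq_bigr => j _; rewrite potE.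
  by case: (i == j); rewrite ?mulr1n ?mulr0n ?mulr0 ?mul0r.
rewrite (kappa_sum _ _ src _ (fun i => u 0 i * conjC (u 0 i))).
set S1 := \sum_e _.
set S2 := \sum_e _.
have hS1 : S1 = \sum_e u 0 (tgt e) * conjC (u 0 (src e)).
  by rewrite /S1 (sum_rev _ _ revK); apply: eq_bigr => e _; have [-> ->] := st e.
have hS2 : S2 = \sum_e u 0 (tgt e) * conjC (u 0 (tgt e)).
  rewrite /S2 (sum_rev _ _ revK); apply: eq_bigr => e _; by case: (st e) => ->.
rewrite -(pmulrn_lle0 _ (isT : (0 < 2)%N)) mulr2n {2}hS1 {2}hS2.
rewrite /S1 /S2 -!sumrB -big_split /= -oppr_ge0 -sumrN; apply: sumr_ge0 => e _.
rewrite (_ : - _ = (u 0 (src e) - u 0 (tgt e)) * conjC (u 0 (src e) - u 0 (tgt e))).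
  exact: mul_conjC_ge0.
by rewrite rmorphB /=; ring.
Qed.

End Final.

Arguments spec_facts {R n M P d}.
Arguments sym_decomp {R n M}.
Arguments seq_big {R T idx op n} d F.
Arguments spec_perm {R n M N d d'}.
Arguments qform0 {R n M P d} u.
Arguments qform_e {R n M P d} i.
Lemma pot_sym (K : nzRingType) n (A : 'M[K]_n) (Q : 'I_n -> K) :
  A^T = A -> (A + pot_mx Q)^T = A + pot_mx Q.
Proof.
move=> As; apply/matrixP => i j; rewrite !mxE.
have -> : A j i = A i j by rewrite -{2}As mxE.
by case: eqVneq => [->|ij]; rewrite ?eqxx // eq_sym (negbTE ij).
Qed.

Lemma pot_symN (K : nzRingType) n (A : 'M[K]_n) (Q : 'I_n -> K) :
  A^T = A -> (A - pot_mx Q)^T = A - pot_mx Q.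
Proof.
move=> As; apply/matrixP => i j; rewrite !mxE.
have -> : A j i = A i j by rewrite -{2}As mxE.
by case: eqVneq => [->|ij]; rewrite ?eqxx // eq_sym (negbTE ij).
Qed.

Lemma rowsumM (R : realType) n (E : finType) (src tgt : E -> 'I_n) (Q : 'I_n -> R) i :
  \sum_j (A0 R src tgt + pot_mx Q) i j = (kappa src i)%:R + Q i.
Proof.
rewrite -(A0_row _ _ src tgt R i) -(@diag_sum _ n (fun i j => Q i) i) -big_split /=.
by apply: eq_bigr => j _; rewrite [in LHS]mxE potE.
Qed.

Lemma trM_eq (R : realType) n (E : finType) (src tgt : E -> 'I_n) (Q : 'I_n -> R) :
  \tr (A0 R src tgt + pot_mx Q) = \tr (A0 R src tgt) + \sum_i Q i.
Proof. by rewrite mxtraceD /pot_mx mxtrace_diag; congr (_ + _); apply: eq_bigr => i _; rewrite mxE. Qed.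

Lemma trB_eq (R : realType) n (E : finType) (src tgt : E -> 'I_n) (Q : 'I_n -> R) :
  \tr (A0 R src tgt - pot_mx Q) = \tr (A0 R src tgt) - \sum_i Q i.
Proof. by rewrite /mxtrace -sumrB; apply: eq_bigr => i _; rewrite !mxE eqxx. Qed.

Arguments pot_sym {K n A} Q.
Arguments pot_symN {K n A} Q.

Theorem proposition2p13 (R : realType) (d n : nat) (E : finType)
  (src tgt : E -> 'I_n) (rev : E -> E) (tau : E -> 'rV[int]_d)
  (Q : 'I_n -> R) :
  periodic_graph_data src tgt rev tau ->
  (* (i) *)
  (same_spectrum (A0 R src tgt + pot_mx Q) (A0 R src tgt) ->
   (forall e, src e != tgt e) ->
   forall v, Q v = 0) /\
  (* (ii) *)
  (same_spectrum (A0 R src tgt + pot_mx Q)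
                 (A0 R src tgt - pot_mx (fun v => (kappa src v)%:R)) ->
   forall v, Q v = - (kappa src v)%:R).
Proof.
move=> [revK [_ [st _]]].
have Asym := A0_sym _ _ src tgt rev revK st R.
have Msym := pot_sym Q Asym.
have [P [dM [PU Me]]] := sym_decomp Msym.
have [cM trM tr2M] := spec_facts PU Me.
split.
- move=> sp noloop.
  have [P' [dA [PU' Ae]]] := sym_decomp Asym.
  have [cA trA tr2A] := spec_facts PU' Ae.
  have pe := spec_perm cM cA sp.
  have Aii : forall i, A0 R src tgt i i = 0.
    move=> i; rewrite A0E big1 // => e _.
    by case: (src e =P i) => //= <-; rewrite eq_sym (negbTE (noloop e)).
  have trE : \tr ((A0 R src tgt + pot_mx Q) *m (A0 R src tgt + pot_mx Q)) =
      \tr (A0 R src tgt *m A0 R src tgt) + \sum_i Q i ^+ 2.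
    rewrite mulmxDl !mulmxDr !mxtraceD -!addrA; congr (_ + _).
    rewrite /pot_mx mul_mx_diag mul_diag_mx mulmx_diag !mxtrace_diag.
    rewrite /mxtrace -!big_split /=; apply: eq_bigr => i _.
    have Aii2 : (#|[set e | src e == i & tgt e == i]|)%:R = 0 :> R.
      by have := Aii i; rewrite mxE.
    by rewrite !mxE Aii2; ring.
  have e2 : \sum_i dM 0 i ^+ 2 = \sum_i dA 0 i ^+ 2.
    by rewrite (seq_big dM (fun x => x ^+ 2)) (seq_big dA (fun x => x ^+ 2)) (perm_big _ pe).
  have H : \sum_i Q i ^+ 2 = 0.
    by apply: (addrI (\tr (A0 R src tgt *m A0 R src tgt))); rewrite -trE addr0 tr2M tr2A e2.
  move=> v; apply/eqP; rewrite -sqrf_eq0; apply/eqP.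
  by apply: (psumr_eq0P _ H) => // i _; exact: sqr_ge0.
- move=> sp v.
  have Bsym := pot_symN (fun v => (kappa src v)%:R) Asym.
  have [P' [dB [PU' Be]]] := sym_decomp Bsym.
  have [cB trB _] := spec_facts PU' Be.
  have pe := spec_perm cM cB sp.
  have dBle : forall j, dB 0 j <= 0.
    move=> j; rewrite -(lecR (dB 0 j) 0) (qform_e j PU' Be).
    exact: lap_form revK st _.
  have dMle : forall i, dM 0 i <= 0.
    move=> i; have : dM 0 i \in [seq dB 0 j | j in 'I_n].
      by rewrite -(perm_mem pe); apply: image_f.
    by case/imageP => j _ ->.
  have trEq : \sum_i Q i + \sum_i (kappa src i)%:R = 0.
    have : \tr (A0 R src tgt + pot_mx Q) =
        \tr (A0 R src tgt - pot_mx (fun v => (kappa src v)%:R)).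
      by rewrite trM trB (seq_big dM (fun x => x)) (seq_big dB (fun x => x)) (perm_big _ pe).
    rewrite trM_eq trB_eq => H.
    by apply: (addrI (\tr (A0 R src tgt))); rewrite addr0 addrA H subrK.
  set M := A0 R src tgt + pot_mx Q in Msym Me trEq *.
  pose u : 'rV[R[i]]_n := const_mx 1.
  have form0 : (u *m map_mx (real_complex R) M *m
                 map_mx conjC (trmx u)) 0 0 = 0.
    rewrite form_expand.
    transitivity (real_complex R (\sum_i \sum_j M i j)).
      rewrite rmorph_sum; apply: eq_bigr => i _; rewrite rmorph_sum.
      by apply: eq_bigr => j _; rewrite !mxE conjC1 mul1r mulr1.
    rewrite (eq_bigr _ (fun i _ => rowsumM _ _ _ src tgt Q i)) big_split /= addrC trEq.
    exact: rmorph0.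
  have := qform0 u Me dMle form0.
  move/matrixP/(_ 0 v).
  have -> : (u *m map_mx (real_complex R) M) 0 v =
      real_complex R (\sum_i M v i).
    rewrite mxE rmorph_sum; apply: eq_bigr => i _.
    by rewrite -{2}Msym [in RHS]mxE !mxE mul1r.
  rewrite rowsumM mxE => /(@complexI R) /eqP.
  by rewrite addrC addr_eq0 => /eqP.
Qed.
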